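(* In the line network model (see context) with any erasure probabilities $p_1,\dots,p_\ell\in[0,1)$, let $T^{(1)}_n:=\sigma_n=\min\{t:\rho_2(t)=n\}$ be the time for all $n$ packets to cross the first link and $\tau_n:=T_n-T^{(1)}_n$ the additional time for the remaining innovative packets at nodes $N^{(2)},\dots,N^{(\ell)}$ to reach the destination. Then $\mathbb{E}T^{(1)}_n=\frac{n}{1-p_1}$ and $\mathbb{E}\tau_n\le\mathbb{E}\tau_{n+1}$ for all $n\ge1$ (where $\tau_{n+1}$ refers to the same model with $n+1$ source packets).
   Context: Line network model. Fix integers $\ell\ge1$, $n\ge1$ and erasure probabilities $p_1,\dots,p_\ell\in[0,1)$. Let $\{z_{t,i}\}$ be independent Bernoulli variables with $\mathbb{P}(z_{t,i}=1)=1-p_i$. The rank $\rho_i(t)$ of node $N^{(i)}$ after $t$ steps satisfies $\rho_1(t)=n$, $\rho_i(0)=0$ for $i\ge2$, and $\rho_{i+1}(t)=\rho_{i+1}(t-1)+z_{t,i}\mathbf 1\{\rho_i(t-1)>\rho_{i+1}(t-1)\}$ for $t\ge1$, $1\le i\le\ell$. The completion time is $T_n:=\min\{t\ge0:\rho_{\ell+1}(t)=n\}$. *)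

(* Defs.v *)
(* Line network with erasures, Bernoulli inputs z t i
   (t >= 1 time step, i in 1..l link index). *)
From Stdlib Require Import Reals Arith List Bool.
Import ListNotations.
Open Scope R_scope.

Definition config := nat -> nat -> bool.

(* rk n l z t i = rho_i(t), node index i in 1..l+1 (node 1 = source). *)
Fixpoint rk (n : nat) (z : config) (t : nat) (i : nat) : nat :=
  match t with
  | O => if (i <=? 1)%nat then n else 0%nat
  | S t' =>
      if (i <=? 1)%nat then n
      else (rk n z t' i +
            (if andb (z (S t') (i - 1)%nat) (rk n z t' i <? rk n z t' (i - 1))%nat
             then 1 else 0))%nat
  end.

(* first t in 0..m with P t, or m+1 if there is none *)
Fixpoint firstHit (P : nat -> bool) (m : nat) : nat :=
  match m with
  | O => if P O then O else 1%nat
  | S m' => let r := firstHit P m' in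
            if (r <=? m')%nat then r else if P (S m') then S m' else S (S m')
  end.

(* sigma_n = T^(1)_n = min{t : rho_2(t) = n}, computed from the first m steps *)
Definition sigmaH (n m : nat) (z : config) : nat :=
  firstHit (fun t => rk n z t 2 =? n)%nat m.
(* T_n = min{t : rho_{l+1}(t) = n}, computed from the first m steps *)
Definition TH (l n m : nat) (z : config) : nat :=
  firstHit (fun t => rk n z t (S l) =? n)%nat m.

Definition upd (z : config) (t i : nat) (b : bool) : config :=
  fun t' i' => if andb (t' =? t)%nat (i' =? i)%nat then b else z t' i'.

Definition vars (l m : nat) : list (nat * nat) :=
  flat_map (fun t => map (fun i => (t, i)) (seq 1 l)) (seq 1 m).

(* Expectation of f under the product Bernoulli law of the listed variables,
   P(z_{t,i} = 1) = 1 - p i; the other coordinates are fixed to z0. *)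
Fixpoint sumcfg (p : nat -> R) (vs : list (nat * nat)) (z0 : config)
  (f : config -> R) : R :=
  match vs with
  | [] => f z0
  | (t, i) :: vs' =>
      (1 - p i) * sumcfg p vs' (upd z0 t i true) f
      + p i * sumcfg p vs' (upd z0 t i false) f
  end.

(* E[f] for f depending only on z_{t,i}, t <= m *)
Definition Em (l : nat) (p : nat -> R) (m : nat) (f : config -> R) : R :=
  sumcfg p (vars l m) (fun _ _ => false) f.

(* Truncated expectations E[X ; T_n <= m]; by monotone convergence
   E[X] = lim_m E[X ; T_n <= m] since T_n < oo a.s. *)
Definition E_sigma_trunc (l : nat) (p : nat -> R) (n m : nat) : R :=
  Em l p m (fun z => if (TH l n m z <=? m)%nat then INR (sigmaH n m z) else 0).

Definition E_tau_trunc (l : nat) (p : nat -> R) (n m : nat) : R :=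
  Em l p m (fun z => if (TH l n m z <=? m)%nat
                     then INR (TH l n m z - sigmaH n m z) else 0).

(* Main.v *)
Require Import Defs.
From Stdlib Require Import Reals Arith List.
From Stdlib Require Import Lia Lra FunctionalExtensionality.
Import ListNotations.
Open Scope R_scope.

Open Scope R_scope.

Definition shift (z : config) : config := fun t i => z (S t) i.

Lemma sumcfg_app p a b z f :
  sumcfg p (a ++ b) z f = sumcfg p a z (fun w => sumcfg p b w f).
Proof.
  revert z; induction a as [|[t i] a IH]; intros z; simpl; auto.
  rewrite !IH; reflexivity.
Qed.

Lemma sumcfg_const p vs z f :
  (forall w t i b, In (t, i) vs -> f (upd w t i b) = f w) ->
  sumcfg p vs z f = f z.
Proof.
  revert z; induction vs as [|[t i] vs IH]; intros z H; simpl; auto.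
  rewrite !IH by (intros; apply H; simpl; auto).
  rewrite !H by (simpl; auto). ring.
Qed.

Lemma sumcfg_plus p vs z f g :
  sumcfg p vs z (fun w => f w + g w) = sumcfg p vs z f + sumcfg p vs z g.
Proof.
  revert z; induction vs as [|[t i] vs IH]; intros z; simpl; auto.
  rewrite !IH; ring.
Qed.

Lemma sumcfg_scal p vs z c f :
  sumcfg p vs z (fun w => c * f w) = c * sumcfg p vs z f.
Proof.
  revert z; induction vs as [|[t i] vs IH]; intros z; simpl; auto.
  rewrite !IH; ring.
Qed.

Lemma sumcfg_ext p vs z f g :
  (forall w, f w = g w) -> sumcfg p vs z f = sumcfg p vs z g.
Proof.
  intros H; replace f with g; auto. apply functional_extensionality; auto.
Qed.

Lemma sumcfg_le p vs z f g :
  (forall v, In v vs -> 0 <= p (snd v) <= 1) ->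
  (forall w, f w <= g w) -> sumcfg p vs z f <= sumcfg p vs z g.
Proof.
  revert z; induction vs as [|[t i] vs IH]; intros z Hp H; simpl; auto.
  assert (Hi := Hp (t, i) (or_introl eq_refl)); simpl in Hi.
  assert (A1 := IH (upd z t i true) (fun v Hv => Hp v (or_intror Hv)) H).
  assert (A2 := IH (upd z t i false) (fun v Hv => Hp v (or_intror Hv)) H).
  apply Rplus_le_compat; apply Rmult_le_compat_l; lra.
Qed.

Lemma sumcfg_ifvar p vs z a b F G :
  ~ In (a, b) vs ->
  sumcfg p vs z (fun w => if w a b then F w else G w) =
  if z a b then sumcfg p vs z F else sumcfg p vs z G.
Proof.
  revert z; induction vs as [|[t i] vs IH]; intros z Hn; simpl; auto.
  rewrite !IH by (intro; apply Hn; simpl; auto).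
  unfold upd at 1 3.
  assert (E : ((a =? t)%nat && (b =? i)%nat)%bool = false).
  { destruct (Nat.eqb_spec a t); destruct (Nat.eqb_spec b i); subst; simpl; auto.
    exfalso; apply Hn; simpl; auto. }
  rewrite E. unfold upd; rewrite E. destruct (z a b); reflexivity.
Qed.

Definition shup (v : nat * nat) := (S (fst v), snd v).

Lemma shift_upd z t i b : shift (upd z (S t) i b) = upd (shift z) t i b.
Proof.
  apply functional_extensionality; intro t'; apply functional_extensionality; intro i'.
  unfold shift, upd; simpl. reflexivity.
Qed.

Lemma sumcfg_shift p vs z H :
  sumcfg p (map shup vs) z (fun w => H (shift w)) = sumcfg p vs (shift z) H.
Proof.
  revert z; induction vs as [|[t i] vs IH]; intros z; simpl; auto.
  rewrite !IH, !shift_upd. reflexivity.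
Qed.

Open Scope R_scope.

Definition layer (l t : nat) := map (fun i => (t, i)) (seq 1 l).

Lemma vars_S_last l m : vars l (S m) = vars l m ++ layer l (S m).
Proof.
  unfold vars. rewrite seq_S, flat_map_app. simpl. rewrite app_nil_r. reflexivity.
Qed.

Lemma flat_map_layer_S l s :
  flat_map (fun t => map (fun i => (t, i)) (seq 1 l)) (map S s) =
  map shup (flat_map (fun t => map (fun i => (t, i)) (seq 1 l)) s).
Proof.
  induction s as [|t s IH]; simpl; auto.
  rewrite IH, map_app, map_map. reflexivity.
Qed.

Lemma vars_S_first l m : vars l (S m) = layer l 1 ++ map shup (vars l m).
Proof.
  unfold vars. change (seq 1 (S m)) with (1%nat :: seq 2 m).
  rewrite <- (seq_shift m 1). cbn [flat_map]. rewrite flat_map_layer_S. reflexivity.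
Qed.

Lemma in_vars l m t i : In (t, i) (vars l m) <-> ((1 <= t <= m)%nat /\ (1 <= i <= l)%nat).
Proof.
  unfold vars. rewrite in_flat_map. split.
  - intros [t' [H1 H2]]. apply in_map_iff in H2. destruct H2 as [i' [E H3]].
    inversion E; subst. apply in_seq in H1; apply in_seq in H3. lia.
  - intros [H1 H2]. exists t. split. apply in_seq; lia.
    apply in_map_iff. exists i. split; auto. apply in_seq; lia.
Qed.

Lemma in_layer l t0 t i : In (t, i) (layer l t0) <-> (t = t0 /\ (1 <= i <= l)%nat).
Proof.
  unfold layer. rewrite in_map_iff. split.
  - intros [i' [E H]]; inversion E; subst. apply in_seq in H; lia.
  - intros [-> H]. exists i; split; auto. apply in_seq; lia.
Qed.

Definition dep (m : nat) (f : config -> R) :=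
  forall z z', (forall t i, (t <= m)%nat -> z t i = z' t i) -> f z = f z'.

Lemma dep_upd m f w t i b : dep m f -> (m < t)%nat -> f (upd w t i b) = f w.
Proof.
  intros D Ht. apply D. intros t' i' Ht'. unfold upd.
  destruct (Nat.eqb_spec t' t); [lia|reflexivity].
Qed.


Lemma Em_horizon l p m f : dep m f -> forall k, Em l p (k + m) f = Em l p m f.
Proof.
  intros D k. induction k as [|k IH]; simpl; auto.
  unfold Em in *. rewrite vars_S_last, sumcfg_app.
  rewrite <- IH. apply sumcfg_ext. intros w. apply sumcfg_const.
  intros w' t i b Hin. apply in_layer in Hin. destruct Hin as [-> _].
  apply (dep_upd m); auto; lia.
Qed.

Lemma Em_horizon_le l p m m' f : dep m f -> (m <= m')%nat -> Em l p m' f = Em l p m f.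
Proof.
  intros D H. replace m' with ((m' - m) + m)%nat by lia. apply Em_horizon; auto.
Qed.

Lemma Em_last l p m f :
  Em l p (S m) f = Em l p m (fun z => sumcfg p (layer l (S m)) z f).
Proof. unfold Em. rewrite vars_S_last, sumcfg_app. reflexivity. Qed.

Lemma Em_plus l p m f g : Em l p m (fun w => f w + g w) = Em l p m f + Em l p m g.
Proof. apply sumcfg_plus. Qed.
Lemma Em_scal l p m c f : Em l p m (fun w => c * f w) = c * Em l p m f.
Proof. apply sumcfg_scal. Qed.
Lemma Em_ext l p m f g : (forall w, f w = g w) -> Em l p m f = Em l p m g.
Proof. apply sumcfg_ext. Qed.
Lemma Em_cst l p m c : Em l p m (fun _ => c) = c.
Proof. unfold Em. apply sumcfg_const; auto. Qed.

Definition okp (l : nat) (p : nat -> R) := forall i, (1 <= i <= l)%nat -> 0 <= p i <= 1.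

Lemma Em_le l p m f g : okp l p -> (forall w, f w <= g w) -> Em l p m f <= Em l p m g.
Proof.
  intros Hp H. apply sumcfg_le; auto. intros [t i] Hv. apply in_vars in Hv.
  apply Hp; simpl; lia.
Qed.

Definition ind0 (f : config -> R) :=
  forall z z', (forall t i, (1 <= t)%nat -> z t i = z' t i) -> f z = f z'.

Lemma sumcfg_ind0 p vs z z' f : ind0 f -> (forall t i, (1 <= t)%nat -> z t i = z' t i) ->
  sumcfg p vs z f = sumcfg p vs z' f.
Proof.
  revert z z'; induction vs as [|[t i] vs IH]; intros z z' D H; simpl; auto.
  rewrite (IH (upd z t i true) (upd z' t i true)), (IH (upd z t i false) (upd z' t i false)); auto;
  intros; unfold upd; destruct (_ && _)%bool; auto.
Qed.

Lemma Em_shift l p m F G : (1 <= l)%nat -> ind0 F -> ind0 G ->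
  Em l p (S m) (fun z => if z 1%nat 1%nat then F (shift z) else G (shift z)) =
  (1 - p 1%nat) * Em l p m F + p 1%nat * Em l p m G.
Proof.
  intros Hl HF HG. unfold Em. rewrite vars_S_first, sumcfg_app.
  rewrite (sumcfg_ext _ _ _ _ (fun z => if z 1%nat 1%nat then sumcfg p (vars l m) (shift z) F
                                         else sumcfg p (vars l m) (shift z) G)).
  2:{ intros w. rewrite sumcfg_ifvar.
      - rewrite !sumcfg_shift. reflexivity.
      - intros Hin. apply in_map_iff in Hin. destruct Hin as [[t i] [E Hv]].
        apply in_vars in Hv. unfold shup in E; simpl in E. inversion E. lia. }
  destruct l as [|l']; [lia|]. unfold layer. simpl.
  rewrite !(sumcfg_const p (map (fun i : nat => (1%nat, i)) (seq 2 l'))).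
  - unfold upd; simpl.
    rewrite (sumcfg_ind0 _ _ _ (fun _ _ => false) F), (sumcfg_ind0 _ _ _ (fun _ _ => false) G); auto.
    all: intros t i Ht; unfold shift; destruct t; [lia|]; simpl; destruct (i =? 1)%nat; reflexivity.
  - intros w t i b Hin; apply in_map_iff in Hin; destruct Hin as [i' [E Hi]];
      inversion E; subst; apply in_seq in Hi; rename i into i';
      assert (Hs : forall t0 i0, (1 <= t0)%nat -> shift (upd w 1 i' b) t0 i0 = shift w t0 i0)
        by (intros t0 i0 H0; unfold shift, upd; destruct t0; [lia|]; reflexivity);
      replace (upd w 1 i' b 1%nat 1%nat) with (w 1%nat 1%nat)
        by (unfold upd; simpl; destruct i' as [|[|i'']]; [lia|lia|reflexivity]);
      rewrite (sumcfg_ind0 _ _ _ (shift w) F), (sumcfg_ind0 _ _ _ (shift w) G); auto.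
  - intros w t i b Hin; apply in_map_iff in Hin; destruct Hin as [i' [E Hi]];
      inversion E; subst; apply in_seq in Hi; rename i into i';
      assert (Hs : forall t0 i0, (1 <= t0)%nat -> shift (upd w 1 i' b) t0 i0 = shift w t0 i0)
        by (intros t0 i0 H0; unfold shift, upd; destruct t0; [lia|]; reflexivity);
      replace (upd w 1 i' b 1%nat 1%nat) with (w 1%nat 1%nat)
        by (unfold upd; simpl; destruct i' as [|[|i'']]; [lia|lia|reflexivity]);
      rewrite (sumcfg_ind0 _ _ _ (shift w) F), (sumcfg_ind0 _ _ _ (shift w) G); auto.
Qed.

Close Scope R_scope.

Lemma FH_spec (P : nat -> bool) m :
  ((firstHit P m <= m)%nat /\ P (firstHit P m) = true /\ forall t, (t < firstHit P m)%nat -> P t = false)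
  \/ (firstHit P m = S m /\ forall t, (t <= m)%nat -> P t = false).
Proof.
  induction m as [|m IH]; simpl.
  - destruct (P 0%nat) eqn:E.
    + left. repeat split; auto; intros; lia.
    + right. split; auto. intros t Ht. assert (t = 0%nat) by lia; subst; auto.
  - destruct IH as [[H1 [H2 H3]]|[H1 H2]].
    + replace (firstHit P m <=? m)%nat with true by (symmetry; apply Nat.leb_le; auto).
      left. repeat split; auto.
    + rewrite H1. replace (S m <=? m)%nat with false by (symmetry; apply Nat.leb_gt; lia).
      destruct (P (S m)) eqn:E.
      * left. repeat split; auto. intros t Ht. apply H2; lia.
      * right. split; auto. intros t Ht. destruct (Nat.eq_dec t (S m)); subst; auto.
        apply H2; lia.
Qed.

Definition monoP (P : nat -> bool) := forall t t', (t <= t')%nat -> P t = true -> P t' = true.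

Lemma FH_le_iff P m : monoP P -> ((firstHit P m <= m)%nat <-> P m = true).
Proof.
  intros M. destruct (FH_spec P m) as [[H1 [H2 H3]]|[H1 H2]].
  - split; auto. intros _. apply (M _ _ H1 H2).
  - split; intros H. lia. rewrite H2 in H; auto; discriminate.
Qed.

Lemma FH_lt P m t : monoP P -> (t <= m)%nat -> ((t < firstHit P m)%nat <-> P t = false).
Proof.
  intros M Ht. destruct (FH_spec P m) as [[H1 [H2 H3]]|[H1 H2]].
  - split; auto. intros Hf. destruct (Nat.lt_ge_cases t (firstHit P m)); auto.
    rewrite (M _ _ H H2) in Hf; discriminate.
  - split; intros; auto; lia.
Qed.

Lemma FH_ext P Q m : (forall t, (t <= m)%nat -> P t = Q t) -> firstHit P m = firstHit Q m.
Proof.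
  induction m as [|m IH]; intros H; simpl.
  - rewrite H; auto.
  - rewrite IH by (intros; apply H; lia). rewrite H; auto.
Qed.

Lemma FH_stable P m m' : (firstHit P m <= m)%nat -> (m <= m')%nat -> firstHit P m' = firstHit P m.
Proof.
  intros H1 H2. induction H2 as [|m' H2 IH]; auto.
  simpl. rewrite IH. replace (firstHit P m <=? m')%nat with true by (symmetry; apply Nat.leb_le; lia).
  auto.
Qed.

Lemma FH_shift P m : P 0%nat = false -> firstHit P (S m) = S (firstHit (fun t => P (S t)) m).
Proof.
  intros H0. induction m as [|m IH].
  - simpl. rewrite H0. simpl. destruct (P 1%nat); auto.
  - change (firstHit P (S (S m))) with
      (let r := firstHit P (S m) in
       if (r <=? S m)%nat then r else if P (S (S m)) then S (S m) else S (S (S m))).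
    rewrite IH.
    assert (E: firstHit (fun t => P (S t)) (S m) = (let r := firstHit (fun t => P (S t)) m in
       if (r <=? m)%nat then r else if P (S (S m)) then S m else S (S m))) by reflexivity.
    rewrite E. cbv zeta.
    change ((S (firstHit (fun t : nat => P (S t)) m) <=? S m)%nat)
      with ((firstHit (fun t : nat => P (S t)) m <=? m)%nat).
    destruct (firstHit (fun t : nat => P (S t)) m <=? m)%nat; auto.
    destruct (P (S (S m))); auto.
Qed.

Lemma FH_le P m t : (t <= m)%nat -> P t = true -> (firstHit P m <= t)%nat.
Proof.
  intros Ht Hp. destruct (FH_spec P m) as [[H1 [H2 H3]]|[H1 H2]].
  - destruct (Nat.le_gt_cases (firstHit P m) t); auto. rewrite H3 in Hp; auto; discriminate.
  - rewrite H2 in Hp; auto; discriminate.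
Qed.

Lemma FH_mono P Q m : (forall t, Q t = true -> P t = true) -> (firstHit P m <= firstHit Q m)%nat.
Proof.
  intros H. destruct (FH_spec Q m) as [[H1 [H2 H3]]|[H1 H2]].
  - apply FH_le; auto.
  - rewrite H1. destruct (FH_spec P m) as [[H4 _]|[H4 _]]; lia.
Qed.

Close Scope R_scope.
Open Scope nat_scope.

Fixpoint rkg (top : nat) (x : nat -> nat) (z : config) (t i : nat) : nat :=
  match t with
  | O => if (i <=? 1)%nat then top else x i
  | S t' =>
      if (i <=? 1)%nat then top
      else (rkg top x z t' i +
            (if andb (z (S t') (i - 1)%nat) (rkg top x z t' i <? rkg top x z t' (i - 1))%nat
             then 1 else 0))%nat
  end.

Lemma rk_rkg n z t i : rk n z t i = rkg n (fun _ => 0%nat) z t i.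
Proof.
  revert i; induction t as [|t IH]; intros i; simpl; auto.
  rewrite !IH. reflexivity.
Qed.

Lemma rkg_le1 top x z t i : (i <= 1)%nat -> rkg top x z t i = top.
Proof.
  intros H; destruct t; simpl; replace (i <=? 1)%nat with true by (symmetry; apply Nat.leb_le; auto); auto.
Qed.

Lemma rkg_S top x z t i : (2 <= i)%nat ->
  rkg top x z (S t) i = (rkg top x z t i +
     (if andb (z (S t) (i - 1)%nat) (rkg top x z t i <? rkg top x z t (i - 1))%nat then 1 else 0))%nat.
Proof.
  intros H. simpl. replace (i <=? 1)%nat with false by (symmetry; apply Nat.leb_gt; lia). auto.
Qed.

Lemma rkg_0 top x z i : (2 <= i)%nat -> rkg top x z 0 i = x i.
Proof. intros H. simpl. replace (i <=? 1)%nat with false by (symmetry; apply Nat.leb_gt; lia). auto. Qed.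

Definition chain0 (top : nat) (x : nat -> nat) :=
  forall i, (2 <= i)%nat -> (x i <= (if (i - 1 <=? 1)%nat then top else x (i - 1)))%nat.

Lemma rkg_chain top x z t i : chain0 top x -> (2 <= i)%nat ->
  (rkg top x z t i <= rkg top x z t (i - 1))%nat.
Proof.
  intros Hx. revert i; induction t as [|t IH]; intros i Hi.
  - rewrite rkg_0 by lia. simpl. apply Hx; auto.
  - rewrite rkg_S by lia. destruct (Nat.le_gt_cases (i - 1) 1).
    + rewrite (rkg_le1 _ _ _ _ (i - 1)) by auto. rewrite (rkg_le1 _ _ _ _ (i - 1)) in * by auto.
      assert (A := IH i Hi). rewrite (rkg_le1 _ _ _ _ (i-1)) in A by auto.
      destruct (z (S t) (i - 1)%nat); simpl; [|lia].
      destruct (Nat.ltb_spec (rkg top x z t i) top); lia.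
    + rewrite (rkg_S _ _ _ _ (i - 1)) by lia.
      assert (A := IH i Hi).
      destruct (z (S t) (i - 1)%nat); simpl; [|lia].
      destruct (Nat.ltb_spec (rkg top x z t i) (rkg top x z t (i-1))); lia.
Qed.

Lemma rkg_top top x z t i : chain0 top x -> (rkg top x z t i <= top)%nat.
Proof.
  intros Hx. induction i as [|i IH].
  - rewrite rkg_le1; lia.
  - destruct (Nat.le_gt_cases (S i) 1). rewrite rkg_le1; lia.
    assert (A := rkg_chain top x z t (S i) Hx ltac:(lia)). simpl in A.
    replace (i - 0)%nat with i in A by lia. lia.
Qed.

Lemma rkg_mono1 top x z t i : (rkg top x z t i <= rkg top x z (S t) i)%nat.
Proof.
  destruct (Nat.le_gt_cases i 1). rewrite !rkg_le1; lia.
  rewrite rkg_S by lia. lia.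
Qed.

Lemma rkg_mono top x z t t' i : (t <= t')%nat -> (rkg top x z t i <= rkg top x z t' i)%nat.
Proof.
  intros H; induction H; auto. etransitivity; eauto. apply rkg_mono1.
Qed.

Lemma rkg_dep top x z z' t i : (forall t' i', (1 <= t' <= t)%nat -> z t' i' = z' t' i') ->
  rkg top x z t i = rkg top x z' t i.
Proof.
  revert i; induction t as [|t IH]; intros i H; simpl; auto.
  rewrite !IH by (intros; apply H; lia). rewrite H by lia. reflexivity.
Qed.

Lemma rkg_x_ext top x y z t i : (forall j, (2 <= j)%nat -> x j = y j) ->
  rkg top x z t i = rkg top y z t i.
Proof.
  intros H. revert i; induction t as [|t IH]; intros i; simpl.
  - destruct (Nat.leb_spec i 1); auto; apply H; lia.
  - rewrite !IH. reflexivity.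
Qed.

Lemma rkg_shift top x z t i :
  rkg top x z (S t) i = rkg top (fun j => rkg top x z 1 j) (shift z) t i.
Proof.
  revert i; induction t as [|t IH]; intros i.
  - destruct (Nat.le_gt_cases i 1). rewrite !rkg_le1; auto.
    rewrite (rkg_0 _ _ (shift z)) by lia. reflexivity.
  - destruct (Nat.le_gt_cases i 1). rewrite !rkg_le1; auto.
    rewrite rkg_S by lia. rewrite (rkg_S _ _ (shift z)) by lia.
    rewrite !IH. reflexivity.
Qed.

Lemma rkg_window top x z l a s : chain0 top x ->
  (forall t i, (a < t <= a + s)%nat -> (1 <= i <= l)%nat -> z t i = true) ->
  forall i, (2 <= i <= S l)%nat -> (Nat.min top (s + 2 - i) <= rkg top x z (a + s) i)%nat.
Proof.
  intros Hx Hz. induction s as [|s IH]; intros i Hi.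
  - lia.
  - replace (a + S s)%nat with (S (a + s)) by lia. rewrite rkg_S by lia.
    rewrite Hz by lia. rewrite Bool.andb_true_l.
    assert (Hz' : forall t i, (a < t <= a+s)%nat -> (1<=i<=l)%nat -> z t i = true) by (intros; apply Hz; lia).
    assert (T1 := rkg_top top x z (a+s) (i-1) Hx).
    destruct (Nat.ltb_spec (rkg top x z (a + s) i) (rkg top x z (a + s) (i - 1))).
    + assert (A := IH Hz' i Hi). lia.
    + destruct (Nat.le_gt_cases (i - 1) 1).
      * rewrite rkg_le1 in H by auto. lia.
      * assert (A := IH Hz' (i - 1)%nat ltac:(lia)). lia.
Qed.

Lemma rkg_window_done top x z l a : (1 <= l) -> chain0 top x ->
  (forall t i, (a < t <= a + (top + l))%nat -> (1 <= i <= l)%nat -> z t i = true) ->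
  rkg top x z (a + (top + l)) (S l) = top.
Proof.
  intros Hl Hx Hz. assert (A := rkg_window top x z l a (top + l)%nat Hx Hz (S l) ltac:(lia)).
  assert (B := rkg_top top x z (a + (top + l))%nat (S l) Hx). lia.
Qed.

Definition e2 : nat -> nat := fun j => if (j =? 2) then 1 else 0.
Definition x0 : nat -> nat := fun _ => 0.

Lemma chain_x0 n : chain0 n x0.
Proof. intros i _. unfold x0. lia. Qed.

Lemma chain_e2 n : chain0 (S n) e2.
Proof.
  intros i Hi. unfold e2. destruct (Nat.eqb_spec i 2); [subst; simpl; lia|].
  lia.
Qed.

Lemma shift_true n z t i : z 1 1 = true ->
  rkg (S n) x0 z (S t) i = rkg (S n) e2 (shift z) t i.
Proof.
  intros H. rewrite rkg_shift. apply rkg_x_ext. intros j Hj.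
  rewrite rkg_S by auto. rewrite rkg_0 by auto. unfold x0, e2.
  destruct (Nat.eqb_spec j 2).
  - subst. simpl. rewrite H. reflexivity.
  - rewrite rkg_0 by lia. simpl. destruct (z 1 (j - 1)); reflexivity.
Qed.

Lemma shift_false n z t i : z 1 1 = false ->
  rkg (S n) x0 z (S t) i = rkg (S n) x0 (shift z) t i.
Proof.
  intros H. rewrite rkg_shift. apply rkg_x_ext. intros j Hj.
  rewrite rkg_S by auto. rewrite rkg_0 by auto. unfold x0.
  destruct (Nat.eqb_spec j 2).
  - subst. simpl. rewrite H. reflexivity.
  - rewrite rkg_0 by lia. simpl. destruct (z 1 (j - 1)); reflexivity.
Qed.

Lemma coupling n z t i :
  (i <= 2 -> rkg (S n) e2 z t i = S (rkg n x0 z t i)) /\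
  rkg n x0 z t i <= rkg (S n) e2 z t i <= S (rkg n x0 z t i).
Proof.
  revert i; induction t as [|t IH]; intros i.
  - destruct (Nat.le_gt_cases i 1). rewrite !rkg_le1 by auto. lia.
    rewrite !rkg_0 by lia. unfold e2, x0. destruct (Nat.eqb_spec i 2); lia.
  - destruct (Nat.le_gt_cases i 1). rewrite !rkg_le1 by auto. lia.
    rewrite !rkg_S by lia.
    destruct (IH i) as [A1 A2]. destruct (IH (i - 1)) as [B1 B2].
    destruct (z (S t) (i - 1)); simpl; [|lia].
    destruct (Nat.ltb_spec (rkg n x0 z t i) (rkg n x0 z t (i - 1)));
    destruct (Nat.ltb_spec (rkg (S n) e2 z t i) (rkg (S n) e2 z t (i - 1))); try lia;
    (split; [|lia]; intros Hi; rewrite A1 in * by lia; rewrite B1 in * by lia; lia).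
Qed.

Open Scope R_scope.

Fixpoint prodR (s : list R) : R := match s with [] => 1 | a :: s' => a * prodR s' end.

Definition Ib (vs : list (nat * nat)) (w : config) : R :=
  if forallb (fun v => w (fst v) (snd v)) vs then 1 else 0.

Lemma sumcfg_mulg p vs z g h :
  (forall w t i b, In (t, i) vs -> g (upd w t i b) = g w) ->
  sumcfg p vs z (fun w => g w * h w) = g z * sumcfg p vs z h.
Proof.
  revert z; induction vs as [|[t i] vs IH]; intros z H; simpl; auto.
  rewrite !IH by (intros; apply H; simpl; auto).
  rewrite !H by (simpl; auto). ring.
Qed.

Lemma upd_other w t i b t' i' : (t', i') <> (t, i) -> upd w t i b t' i' = w t' i'.
Proof.
  intros H. unfold upd. destruct (Nat.eqb_spec t' t); destruct (Nat.eqb_spec i' i); subst; simpl; auto.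
  congruence.
Qed.

Lemma upd_same w t i b : upd w t i b t i = b.
Proof. unfold upd. rewrite !Nat.eqb_refl. reflexivity. Qed.

Lemma sumcfg_Ib p vs z g : NoDup vs ->
  (forall w t i b, In (t, i) vs -> g (upd w t i b) = g w) ->
  sumcfg p vs z (fun w => g w * Ib vs w) = g z * prodR (map (fun v => 1 - p (snd v)) vs).
Proof.
  revert z g; induction vs as [|[t i] vs IH]; intros z g ND H.
  - simpl. unfold Ib. simpl. ring.
  - inversion ND as [|? ? Hn ND']; subst.
    simpl sumcfg.
    assert (E : forall z', sumcfg p vs z' (fun w => g w * Ib ((t, i) :: vs) w) =
                      sumcfg p vs z' (fun w => (g w * (if w t i then 1 else 0)) * Ib vs w)).
    { intros z'. apply sumcfg_ext. intros w. unfold Ib. simpl. destruct (w t i); simpl; ring. }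
    rewrite !E, !IH; auto.
    + rewrite !upd_same, !H by (simpl; auto). simpl. ring.
    + intros w t' i' b Hin. rewrite H by (simpl; auto). rewrite upd_other; auto.
      intros Heq; inversion Heq; subst; auto.
    + intros w t' i' b Hin. rewrite H by (simpl; auto). rewrite upd_other; auto.
      intros Heq; inversion Heq; subst; auto.
Qed.

Definition blk (l a b : nat) := flat_map (fun t => layer l t) (seq (S a) b).

Lemma vars_add l a b : vars l (a + b) = vars l a ++ blk l a b.
Proof. unfold vars, blk. rewrite seq_app, flat_map_app. reflexivity. Qed.

Lemma in_blk l a b t i : In (t, i) (blk l a b) <-> ((a < t <= a + b)%nat /\ (1 <= i <= l)%nat).
Proof.
  unfold blk. rewrite in_flat_map. split.
  - intros [t' [H1 H2]]. apply in_layer in H2. apply in_seq in H1. lia.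
  - intros [H1 H2]. exists t. split. apply in_seq; lia. apply in_layer; auto.
Qed.

Lemma NoDup_blk l a b : NoDup (blk l a b).
Proof.
  unfold blk. generalize (seq_NoDup b (S a)). generalize (seq (S a) b) as s.
  induction s as [|t s IH]; intros ND; simpl. constructor.
  inversion ND; subst. apply NoDup_app.
  - unfold layer. apply NoDup_map_inv with (f := snd). rewrite map_map. simpl. rewrite map_id.
    apply seq_NoDup.
  - apply IH; auto.
  - intros [t0 i0] Ha Hb. apply in_layer in Ha. destruct Ha as [-> _].
    apply in_flat_map in Hb. destruct Hb as [t'' [H3 H4]]. apply in_layer in H4. destruct H4; subst; auto.
Qed.

Definition ql (l : nat) (p : nat -> R) := prodR (map (fun i => 1 - p i) (seq 1 l)).

Lemma prod_blk l p a b : prodR (map (fun v => 1 - p (snd v)) (blk l a b)) = ql l p ^ b.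
Proof.
  unfold blk. revert a; induction b as [|b IH]; intros a; simpl; auto.
  rewrite map_app. 
  assert (G : forall s s', prodR (s ++ s') = prodR s * prodR s').
  { induction s as [|u s IHs]; intros; simpl; [ring | rewrite IHs; ring]. }
  rewrite G, IH. unfold layer, ql. rewrite map_map. simpl. reflexivity.
Qed.

Lemma ql_bounds l p : (forall i, (1 <= i <= l)%nat -> 0 <= p i < 1) -> 0 < ql l p <= 1.
Proof.
  intros H. unfold ql. assert (Hs : forall i, In i (seq 1 l) -> 0 <= p i < 1)
    by (intros i Hi; apply in_seq in Hi; apply H; lia).
  clear H. induction (seq 1 l) as [|i s IH]; simpl. lra.
  assert (A := Hs i (or_introl eq_refl)).
  destruct (IH (fun j Hj => Hs j (or_intror Hj))).
  split. apply Rmult_lt_0_compat; lra.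
  nra.
Qed.

Open Scope R_scope.

Definition doneb top x l (z : config) t := (rkg top x z t (S l) =? top)%nat.
Definition ndR top x l t (z : config) : R := if doneb top x l z t then 0 else 1.

Lemma doneb_mono top x l z : chain0 top x -> monoP (doneb top x l z).
Proof.
  intros Hx t t' H E. unfold doneb in *. apply Nat.eqb_eq in E. apply Nat.eqb_eq.
  assert (A := rkg_mono top x z t t' (S l) H). assert (B := rkg_top top x z t' (S l) Hx). lia.
Qed.

Lemma nd_dep top x l t : dep t (ndR top x l t).
Proof.
  intros z z' H. unfold ndR, doneb. rewrite (rkg_dep top x z z' t); auto.
  intros; apply H; lia.
Qed.

Lemma nd_ind0 top x l t : ind0 (ndR top x l t).
Proof.
  intros z z' H. unfold ndR, doneb. rewrite (rkg_dep top x z z' t); auto.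
  intros; apply H; lia.
Qed.

Lemma nd_mono top x l t t' z : chain0 top x -> (t <= t')%nat -> ndR top x l t' z <= ndR top x l t z.
Proof.
  intros Hx H. unfold ndR. destruct (doneb top x l z t) eqn:E.
  rewrite (doneb_mono top x l z Hx t t' H E). lra.
  destruct (doneb top x l z t'); lra.
Qed.

Lemma nd_bounds top x l t z : 0 <= ndR top x l t z <= 1.
Proof. unfold ndR. destruct (doneb top x l z t); lra. Qed.

Lemma okp_of l p : (forall i, (1 <= i <= l)%nat -> 0 <= p i < 1) -> okp l p.
Proof. intros H i Hi. specialize (H i Hi). lra. Qed.

Lemma tail_mult top x l p k : (1 <= l)%nat -> chain0 top x ->
  (forall i, (1 <= i <= l)%nat -> 0 <= p i < 1) ->
  Em l p (k * (top + l)) (ndR top x l (k * (top + l))) <= (1 - ql l p ^ (top + l)) ^ k.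
Proof.
  intros Hl Hx Hp. set (W := (top + l)%nat).
  assert (Hq := ql_bounds l p Hp).
  assert (Hpi : 0 < ql l p ^ W <= 1).
  { split. apply pow_lt; lra. rewrite <- (pow1 W). apply pow_incr. lra. }
  induction k as [|k IH].
  - simpl. rewrite <- (Em_cst l p 0 1). apply Em_le. apply okp_of; auto.
    intros w; apply nd_bounds.
  - replace (S k * W)%nat with (k * W + W)%nat by lia.
    unfold Em at 1. rewrite vars_add, sumcfg_app.
    apply Rle_trans with (sumcfg p (vars l (k * W)) (fun _ _ => false)
       (fun z => sumcfg p (blk l (k * W) W) z (fun w => ndR top x l (k * W) w * (1 - Ib (blk l (k * W) W) w)))).
    + apply sumcfg_le.
      { intros [t i] Hv. apply in_vars in Hv. simpl. specialize (Hp i ltac:(lia)). lra. }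
      intros z. apply sumcfg_le.
      { intros [t i] Hv. apply in_blk in Hv. simpl. specialize (Hp i ltac:(lia)). lra. }
      intros w. unfold Ib. destruct (forallb _ _) eqn:Ef.
      * assert (D : doneb top x l w (k * W + W) = true).
        { unfold doneb. apply Nat.eqb_eq. apply rkg_window_done; auto.
          intros t i Ht Hi. rewrite forallb_forall in Ef. apply (Ef (t, i)). apply in_blk. lia. }
        unfold ndR at 1. rewrite D. assert (B := nd_bounds top x l (k * W) w). nra.
      * rewrite Rminus_0_r, Rmult_1_r. apply nd_mono; auto. lia.
    + rewrite (sumcfg_ext _ _ _ _ (fun z => ndR top x l (k * W) z * (1 - ql l p ^ W))).
      * fold (Em l p (k * W) (fun z => ndR top x l (k * W) z * (1 - ql l p ^ W))).
        rewrite (Em_ext _ _ _ _ (fun z => (1 - ql l p ^ W) * ndR top x l (k * W) z)) by (intros; ring).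
        rewrite Em_scal. simpl. apply Rmult_le_compat_l. lra. auto.
      * intros z. rewrite sumcfg_mulg.
        2:{ intros w t i b Hin. apply in_blk in Hin. apply (dep_upd (k * W)). apply nd_dep. lia. }
        f_equal.
        rewrite (sumcfg_ext _ _ _ _ (fun w => 1 + (-1) * ((fun _ => 1) w * Ib (blk l (k * W) W) w)))
          by (intros; ring).
        rewrite sumcfg_plus, sumcfg_scal, sumcfg_Ib.
        -- rewrite sumcfg_const by auto. rewrite prod_blk. ring.
        -- apply NoDup_blk.
        -- auto.
Qed.

Open Scope R_scope.

Fixpoint sumR (a : nat -> R) (m : nat) : R :=
  match m with O => 0 | S m' => sumR a m' + a m' end.

Lemma sumR_add a x y : sumR a (x + y) = sumR a x + sumR (fun j => a (x + j)%nat) y.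
Proof.
  induction y as [|y IH]; simpl. rewrite Nat.add_0_r; ring.
  rewrite Nat.add_succ_r. simpl. rewrite IH. ring.
Qed.

Lemma sumR_le a b m : (forall t, (t < m)%nat -> a t <= b t) -> sumR a m <= sumR b m.
Proof.
  induction m as [|m IH]; intros H; simpl. lra.
  apply Rplus_le_compat. apply IH; intros; apply H; lia. apply H; lia.
Qed.

Lemma sumR_nonneg a m : (forall t, 0 <= a t) -> 0 <= sumR a m.
Proof. intros H; induction m; simpl. lra. specialize (H m). lra. Qed.

Lemma sumR_mono_m a m m' : (forall t, 0 <= a t) -> (m <= m')%nat -> sumR a m <= sumR a m'.
Proof.
  intros H Hm. induction Hm. lra. simpl. specialize (H m0). lra.
Qed.

Lemma sumR_cst c m : sumR (fun _ => c) m = INR m * c.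
Proof. induction m; simpl sumR. simpl; ring. rewrite IHm, S_INR. ring. Qed.

Lemma geo_eq r K : (1 - r) * sumR (fun k => r ^ k) K = 1 - r ^ K.
Proof. induction K as [|K IH]; simpl. ring. rewrite Rmult_plus_distr_l, IH. ring. Qed.

Lemma geo_le r K : 0 <= r < 1 -> sumR (fun k => r ^ k) K <= / (1 - r).
Proof.
  intros Hr. assert (E := geo_eq r K). assert (0 <= r ^ K) by (apply pow_le; lra).
  apply Rmult_le_reg_l with (1 - r). lra. rewrite E, Rinv_r by lra. lra.
Qed.



Lemma pow_anti r a b : 0 <= r <= 1 -> (a <= b)%nat -> r ^ b <= r ^ a.
Proof.
  intros Hr H. replace b with (a + (b - a))%nat by lia. rewrite pow_add.
  assert (0 <= r ^ a) by (apply pow_le; lra).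
  assert (r ^ (b - a) <= 1) by (rewrite <- (pow1 (b - a)); apply pow_incr; lra).
  assert (0 <= r ^ (b - a)) by (apply pow_le; lra). nra.
Qed.

Lemma jrj_le r j : 0 <= r < 1 -> INR (S j) * r ^ j <= / (1 - r).
Proof.
  intros Hr. eapply Rle_trans; [|apply (geo_le r (S j) Hr)].
  rewrite <- sumR_cst. apply sumR_le. intros t Ht. apply pow_anti; lra || lia.
Qed.

Section Tail.
Variables (a : nat -> R) (W : nat) (r : R).
Hypotheses (Ha : forall m, 0 <= a m) (HW : (1 <= W)%nat) (Hr : 0 <= r < 1)
  (Hb : forall k m, (k * W <= m)%nat -> a m <= r ^ k).

Lemma tail_sum_blocks K : sumR a (K * W) <= INR W * sumR (fun k => r ^ k) K.
Proof.
  induction K as [|K IH]; simpl. lra.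
  replace (W + K * W)%nat with (K * W + W)%nat by lia. rewrite sumR_add.
  rewrite Rmult_plus_distr_l. apply Rplus_le_compat; auto.
  rewrite <- sumR_cst. apply sumR_le. intros t Ht. apply Hb. lia.
Qed.

Lemma tail_sum m : sumR a m <= INR W / (1 - r).
Proof.
  eapply Rle_trans. apply (sumR_mono_m a m (m * W)); auto. nia.
  eapply Rle_trans. apply tail_sum_blocks. unfold Rdiv. apply Rmult_le_compat_l.
  apply pos_INR. apply geo_le; auto.
Qed.

Lemma tail_bound m : INR m * a m <= 2 * INR W / (1 - r) * r ^ (m / W / 2).
Proof.
  set (K := (m / W)%nat). set (j := (K / 2)%nat).
  assert (HK1 : (K * W <= m)%nat).
  { unfold K. rewrite Nat.mul_comm. apply Nat.Div0.mul_div_le. }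
  assert (HK2 : (m < W * S K)%nat) by (apply Nat.mul_succ_div_gt; lia).
  assert (Hj1 : (2 * j <= K)%nat) by (unfold j; apply Nat.Div0.mul_div_le).
  assert (Hj2 : (K < 2 * S j)%nat) by (apply Nat.mul_succ_div_gt; lia).
  assert (A1 : a m <= r ^ (j + j)) by (apply Hb; nia).
  rewrite pow_add in A1.
  assert (A2 : INR m <= INR W * (2 * INR (S j))).
  { replace 2 with (INR 2) by (simpl; ring). rewrite <- !mult_INR. apply le_INR. nia. }
  assert (A3 := jrj_le r j Hr).
  assert (P0 : 0 <= r ^ j) by (apply pow_le; lra).
  assert (P1 : 0 <= INR W) by apply pos_INR.
  assert (P2 : 0 <= INR m) by apply pos_INR.
  assert (P3 : 0 <= INR (S j)) by apply pos_INR.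
  apply Rle_trans with (INR W * (2 * INR (S j)) * (r ^ j * r ^ j)).
  { apply Rmult_le_compat; auto. }
  apply Rle_trans with (2 * INR W * r ^ j * (INR (S j) * r ^ j)).
  { right; ring. }
  unfold Rdiv. replace (2 * INR W * / (1 - r) * r ^ j) with (2 * INR W * r ^ j * / (1 - r)) by ring.
  apply Rmult_le_compat_l; auto. assert (0 <= 2 * INR W) by lra. apply Rmult_le_pos; auto.
Qed.

Lemma tail_cv : Un_cv (fun m => INR m * a m) 0.
Proof.
  intros eps Heps.
  set (C := 2 * INR W / (1 - r)).
  assert (HC : 0 < C).
  { unfold C. apply Rdiv_lt_0_compat. assert (1 <= INR W) by (replace 1 with (INR 1) by auto; apply le_INR; auto). lra. lra. }
  destruct (pow_lt_1_zero r ltac:(rewrite Rabs_right; lra) (eps / C) ltac:(apply Rdiv_lt_0_compat; lra)) as [N0 HN0].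
  exists (2 * N0 * W)%nat. intros m Hm. unfold Rdist. rewrite Rminus_0_r.
  assert (P : 0 <= INR m * a m) by (apply Rmult_le_pos; auto; apply pos_INR).
  rewrite Rabs_right by lra.
  eapply Rle_lt_trans. apply tail_bound. fold C.
  assert (Hj : (N0 <= m / W / 2)%nat).
  { apply Nat.div_le_lower_bound. lia. apply Nat.div_le_lower_bound. lia. lia. }
  specialize (HN0 _ Hj). rewrite Rabs_right in HN0 by (apply Rle_ge, pow_le; lra).
  apply Rmult_lt_compat_l with (r := C) in HN0; auto.
  replace (C * (eps / C)) with eps in HN0 by (field; lra). lra.
Qed.
End Tail.

Open Scope R_scope.

Definition Tsys top x l m z := firstHit (doneb top x l z) m.
Definition Ssys top x m (z : config) := firstHit (fun t => rkg top x z t 2 =? top)%nat m.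
Definition Ftau top x l m z : R :=
  if (Tsys top x l m z <=? m)%nat then INR (Tsys top x l m z - Ssys top x m z) else 0.

Lemma chain_le top x z t i j : chain0 top x -> (j <= i)%nat -> (rkg top x z t i <= rkg top x z t j)%nat.
Proof.
  intros Hx H. induction H. lia.
  destruct (Nat.le_gt_cases (S m) 1). rewrite !rkg_le1 by lia.
  assert (B := rkg_top top x z t j Hx). lia.
  assert (A := rkg_chain top x z t (S m) Hx ltac:(lia)). simpl in A.
  replace (m - 0)%nat with m in A by lia. lia.
Qed.

Lemma S2_mono top x z : chain0 top x -> monoP (fun t => rkg top x z t 2 =? top)%nat.
Proof.
  intros Hx t t' H E. apply Nat.eqb_eq in E. apply Nat.eqb_eq.
  assert (A := rkg_mono top x z t t' 2 H). assert (B := rkg_top top x z t' 2 Hx). lia.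
Qed.

Lemma S_le_T top x l m z : (1 <= l)%nat -> chain0 top x -> (Ssys top x m z <= Tsys top x l m z)%nat.
Proof.
  intros Hl Hx. apply FH_mono. intros t E. unfold doneb in E. apply Nat.eqb_eq in E.
  apply Nat.eqb_eq. assert (A := chain_le top x z t (S l) 2 Hx ltac:(lia)).
  assert (B := rkg_top top x z t 2 Hx). lia.
Qed.

Lemma T_le_iff top x l m z : chain0 top x -> ((Tsys top x l m z <= m)%nat <-> doneb top x l z m = true).
Proof. intros Hx. apply FH_le_iff. apply doneb_mono; auto. Qed.

Lemma Ftau_dep top x l m : dep m (Ftau top x l m).
Proof.
  intros z z' H. unfold Ftau, Tsys, Ssys, doneb.
  rewrite (FH_ext (fun t => rkg top x z t (S l) =? top)%nat (fun t => rkg top x z' t (S l) =? top)%nat).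
  rewrite (FH_ext (fun t => rkg top x z t 2 =? top)%nat (fun t => rkg top x z' t 2 =? top)%nat).
  reflexivity.
  all: intros t Ht; rewrite (rkg_dep top x z z' t); auto; intros; apply H; lia.
Qed.



Lemma Ftau_ind0 top x l m : ind0 (Ftau top x l m).
Proof.
  intros z z' H. unfold Ftau, Tsys, Ssys, doneb.
  rewrite (FH_ext (fun t => rkg top x z t (S l) =? top)%nat (fun t => rkg top x z' t (S l) =? top)%nat).
  rewrite (FH_ext (fun t => rkg top x z t 2 =? top)%nat (fun t => rkg top x z' t 2 =? top)%nat).
  reflexivity.
  all: intros t Ht; rewrite (rkg_dep top x z z' t); auto; intros; apply H; lia.
Qed.

Lemma Ftau_nonneg top x l m z : 0 <= Ftau top x l m z.
Proof. unfold Ftau. destruct (_ <=? _)%nat. apply pos_INR. lra. Qed.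

Lemma Ftau_growing_pt top x l m z : (1 <= l)%nat -> chain0 top x ->
  Ftau top x l m z <= Ftau top x l (S m) z.
Proof.
  intros Hl Hx. unfold Ftau. destruct (Nat.leb_spec (Tsys top x l m z) m).
  - assert (E1 : Tsys top x l (S m) z = Tsys top x l m z) by (apply FH_stable; auto).
    assert (E2 : Ssys top x (S m) z = Ssys top x m z).
    { apply FH_stable; auto. assert (A := S_le_T top x l m z Hl Hx). unfold Ssys, Tsys in *. lia. }
    rewrite E1, E2. replace (Tsys top x l m z <=? S m)%nat with true by (symmetry; apply Nat.leb_le; lia).
    lra.
  - destruct (_ <=? _)%nat. apply pos_INR. lra.
Qed.

Lemma Em_Ftau_growing top x l p : (1 <= l)%nat -> chain0 top x -> okp l p ->
  Un_growing (fun m => Em l p m (Ftau top x l m)).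
Proof.
  intros Hl Hx Hp m. rewrite <- (Em_horizon_le l p m (S m) (Ftau top x l m)) by (apply Ftau_dep || lia).
  apply Em_le; auto. intros; apply Ftau_growing_pt; auto.
Qed.

Lemma count_nd top x l m z : chain0 top x -> forall k, (k <= m)%nat ->
  sumR (fun t => ndR top x l t z) k = INR (Nat.min k (Tsys top x l m z)).
Proof.
  intros Hx. induction k as [|k IH]; intros Hk. simpl. reflexivity.
  simpl sumR. rewrite IH by lia.
  assert (L := FH_lt (doneb top x l z) m k (doneb_mono top x l z Hx) ltac:(lia)).
  unfold ndR. fold (Tsys top x l m z) in L.
  destruct (doneb top x l z k) eqn:E.
  - assert (~ (k < Tsys top x l m z)%nat) by (intro H; apply L in H; congruence).
    replace (Nat.min (S k) (Tsys top x l m z)) with (Nat.min k (Tsys top x l m z)) by lia. ring.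
  - assert (H : (k < Tsys top x l m z)%nat) by (apply L; auto).
    replace (Nat.min (S k) (Tsys top x l m z)) with (S (Nat.min k (Tsys top x l m z))) by lia.
    rewrite S_INR. ring.
Qed.

Lemma Ftau_le_sum top x l m z : chain0 top x ->
  Ftau top x l m z <= sumR (fun t => ndR top x l t z) m.
Proof.
  intros Hx. rewrite (count_nd top x l m z Hx m) by lia. unfold Ftau.
  destruct (Nat.leb_spec (Tsys top x l m z) m).
  - apply le_INR. lia.
  - apply pos_INR.
Qed.

Lemma Em_sumR l p m f K :
  Em l p m (fun z => sumR (fun t => f t z) K) = sumR (fun t => Em l p m (f t)) K.
Proof.
  induction K as [|K IH]; simpl. apply Em_cst.
  rewrite Em_plus, IH. reflexivity.
Qed.

Definition asys l p top x m := Em l p m (ndR top x l m).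

Lemma asys_tail l p top x : (1 <= l)%nat -> chain0 top x ->
  (forall i, (1 <= i <= l)%nat -> 0 <= p i < 1) ->
  forall k m, (k * (top + l) <= m)%nat -> asys l p top x m <= (1 - ql l p ^ (top + l)) ^ k.
Proof.
  intros Hl Hx Hp k m Hm. unfold asys.
  eapply Rle_trans; [|apply tail_mult; auto].
  rewrite <- (Em_horizon_le l p (k * (top + l)) m) by (apply nd_dep || auto).
  apply Em_le. apply okp_of; auto. intros; apply nd_mono; auto. auto.
Qed.

Lemma asys_nonneg l p top x m : okp l p -> 0 <= asys l p top x m.
Proof.
  intros Hp. unfold asys. rewrite <- (Em_cst l p m 0). apply Em_le; auto.
  intros; apply nd_bounds.
Qed.

Lemma r_bounds l p top : (forall i, (1 <= i <= l)%nat -> 0 <= p i < 1) ->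
  0 <= 1 - ql l p ^ (top + l) < 1.
Proof.
  intros Hp. assert (Hq := ql_bounds l p Hp).
  assert (0 < ql l p ^ (top + l)) by (apply pow_lt; lra).
  assert (ql l p ^ (top + l) <= 1) by (rewrite <- (pow1 (top + l)); apply pow_incr; lra).
  lra.
Qed.

Lemma asys_cv l p top x : (1 <= l)%nat -> chain0 top x ->
  (forall i, (1 <= i <= l)%nat -> 0 <= p i < 1) ->
  Un_cv (fun m => INR m * asys l p top x m) 0.
Proof.
  intros Hl Hx Hp. apply (tail_cv _ (top + l) (1 - ql l p ^ (top + l))).
  intros; apply asys_nonneg, okp_of; auto. lia. apply r_bounds; auto.
  apply asys_tail; auto.
Qed.

Lemma Ftau_bounded l p top x : (1 <= l)%nat -> chain0 top x ->
  (forall i, (1 <= i <= l)%nat -> 0 <= p i < 1) ->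
  forall m, Em l p m (Ftau top x l m) <= INR (top + l) / (1 - (1 - ql l p ^ (top + l))).
Proof.
  intros Hl Hx Hp m.
  eapply Rle_trans. apply Em_le. apply okp_of; auto. intros z; apply (Ftau_le_sum top x l m z Hx).
  rewrite Em_sumR.
  eapply Rle_trans; [|apply (tail_sum (asys l p top x) (top + l) (1 - ql l p ^ (top + l)))].
  - apply sumR_le. intros t Ht. unfold asys. right. apply Em_horizon_le; [apply nd_dep | lia].
  - intros; apply asys_nonneg, okp_of; auto.
  - lia.
  - apply r_bounds; auto.
  - apply asys_tail; auto.
Qed.

Lemma Ftau_cv l p top x : (1 <= l)%nat -> chain0 top x ->
  (forall i, (1 <= i <= l)%nat -> 0 <= p i < 1) ->
  { a | Un_cv (fun m => Em l p m (Ftau top x l m)) a }.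
Proof.
  intros Hl Hx Hp. apply growing_cv. apply Em_Ftau_growing; auto. apply okp_of; auto.
  exists (INR (top + l) / (1 - (1 - ql l p ^ (top + l)))). intros y [m ->]. apply Ftau_bounded; auto.
Qed.

Open Scope R_scope.

Lemma TH_Tsys l n m z : TH l n m z = Tsys n x0 l m z.
Proof. unfold TH, Tsys, doneb. apply FH_ext. intros. rewrite rk_rkg. reflexivity. Qed.

Lemma sigmaH_Ssys n m z : sigmaH n m z = Ssys n x0 m z.
Proof. unfold sigmaH, Ssys. apply FH_ext. intros. rewrite rk_rkg. reflexivity. Qed.

Lemma Etau_eq l p n m : E_tau_trunc l p n m = Em l p m (Ftau n x0 l m).
Proof.
  unfold E_tau_trunc. apply Em_ext. intros z. unfold Ftau. rewrite TH_Tsys, sigmaH_Ssys. reflexivity.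
Qed.

Lemma Ftau_shift n l m z : (1 <= l)%nat ->
  Ftau (S n) x0 l (S m) z =
  if z 1%nat 1%nat then Ftau (S n) e2 l m (shift z) else Ftau (S n) x0 l m (shift z).
Proof.
  intros Hl. unfold Ftau, Tsys, Ssys.
  rewrite !FH_shift.
  2:{ rewrite rkg_0 by lia. reflexivity. }
  2:{ unfold doneb. rewrite rkg_0 by lia. reflexivity. }
  destruct (z 1%nat 1%nat) eqn:Ez.
  - rewrite (FH_ext (fun t => doneb (S n) x0 l z (S t)) (doneb (S n) e2 l (shift z)))
      by (intros; unfold doneb; rewrite shift_true; auto).
    rewrite (FH_ext (fun t => rkg (S n) x0 z (S t) 2 =? S n)%nat (fun t => rkg (S n) e2 (shift z) t 2 =? S n)%nat)
      by (intros; rewrite shift_true; auto).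
    reflexivity.
  - rewrite (FH_ext (fun t => doneb (S n) x0 l z (S t)) (doneb (S n) x0 l (shift z)))
      by (intros; unfold doneb; rewrite shift_false; auto).
    rewrite (FH_ext (fun t => rkg (S n) x0 z (S t) 2 =? S n)%nat (fun t => rkg (S n) x0 (shift z) t 2 =? S n)%nat)
      by (intros; rewrite shift_false; auto).
    reflexivity.
Qed.

Lemma Etau_rec l p n m : (1 <= l)%nat ->
  E_tau_trunc l p (S n) (S m) =
  (1 - p 1%nat) * Em l p m (Ftau (S n) e2 l m) + p 1%nat * E_tau_trunc l p (S n) m.
Proof.
  intros Hl. rewrite !Etau_eq.
  rewrite (Em_ext _ _ _ _ (fun z => if z 1%nat 1%nat then Ftau (S n) e2 l m (shift z) else Ftau (S n) x0 l m (shift z)))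
    by (intros; apply Ftau_shift; auto).
  apply Em_shift; auto; apply Ftau_ind0.
Qed.

Lemma coupling_pt n l m w : (1 <= l)%nat ->
  Ftau n x0 l m w - INR m * ndR (S n) e2 l m w <= Ftau (S n) e2 l m w.
Proof.
  intros Hl. unfold ndR.
  destruct (doneb (S n) e2 l w m) eqn:Ed.
  - assert (HT := proj2 (T_le_iff (S n) e2 l m w (chain_e2 n)) Ed).
    assert (HS : Ssys (S n) e2 m w = Ssys n x0 m w).
    { unfold Ssys. apply FH_ext. intros t _. destruct (coupling n w t 2) as [A _].
      rewrite A by lia. destruct (Nat.eqb_spec (rkg n x0 w t 2) n); destruct (Nat.eqb_spec (S (rkg n x0 w t 2)) (S n)); auto; lia. }
    assert (HTT : (Tsys n x0 l m w <= Tsys (S n) e2 l m w)%nat).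
    { apply FH_mono. intros t Et. unfold doneb in *. apply Nat.eqb_eq in Et. apply Nat.eqb_eq.
      destruct (coupling n w t (S l)) as [_ A]. assert (B := rkg_top n x0 w t (S l) (chain_x0 n)). lia. }
    unfold Ftau. rewrite HS.
    replace (Tsys (S n) e2 l m w <=? m)%nat with true by (symmetry; apply Nat.leb_le; auto).
    replace (Tsys n x0 l m w <=? m)%nat with true by (symmetry; apply Nat.leb_le; lia).
    rewrite Rmult_0_r, Rminus_0_r. apply le_INR. lia.
  - rewrite Rmult_1_r. assert (A := Ftau_nonneg (S n) e2 l m w).
    assert (B : Ftau n x0 l m w <= INR m).
    { unfold Ftau. destruct (Nat.leb_spec (Tsys n x0 l m w) m). apply le_INR; lia. apply pos_INR. }
    lra.
Qed.

Open Scope R_scope.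

Definition nd2 n t (z : config) : R := if (rkg n x0 z t 2 <? n)%nat then 1 else 0.
Definition rho2R n m (z : config) : R := INR (rkg n x0 z m 2).

Lemma rho_upd_other n m w i b : (i <> 1)%nat ->
  rkg n x0 (upd w (S m) i b) (S m) 2 = rkg n x0 w (S m) 2.
Proof.
  intros Hi. rewrite !rkg_S by lia.
  rewrite !(rkg_dep n x0 (upd w (S m) i b) w m) by (intros; apply upd_other; intro E; inversion E; lia).
  rewrite upd_other by (intro E; inversion E; lia). reflexivity.
Qed.

Lemma rho_upd_same n m w b :
  rkg n x0 (upd w (S m) 1 b) (S m) 2 = (rkg n x0 w m 2 + (if (b && (rkg n x0 w m 2 <? n))%bool then 1 else 0))%nat.
Proof.
  rewrite !rkg_S by lia.
  rewrite !(rkg_dep n x0 (upd w (S m) 1 b) w m) by (intros; apply upd_other; intro E; inversion E; lia).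
  simpl (2 - 1)%nat. rewrite upd_same. rewrite (rkg_le1 n x0 w m 1) by lia. reflexivity.
Qed.

Lemma nd2_dep n t : dep t (nd2 n t).
Proof. intros z z' H. unfold nd2. rewrite (rkg_dep n x0 z z' t); auto. intros; apply H; lia. Qed.

Lemma rho2_dep n t : dep t (rho2R n t).
Proof. intros z z' H. unfold rho2R. rewrite (rkg_dep n x0 z z' t); auto. intros; apply H; lia. Qed.

Lemma dep_mono t m f : dep t f -> (t <= m)%nat -> dep m f.
Proof. intros D H z z' E. apply D. intros; apply E; lia. Qed.

Lemma dep_sumR m (f : nat -> config -> R) K : (forall t, (t < K)%nat -> dep m (f t)) ->
  dep m (fun z => sumR (fun t => f t z) K).
Proof.
  intros H z z' E. induction K as [|K IH]; simpl; auto.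
  rewrite IH by (intros; apply H; lia). rewrite (H K ltac:(lia) z z' E). reflexivity.
Qed.

Lemma wald l p n m : (1 <= l)%nat ->
  Em l p m (rho2R n m) = (1 - p 1%nat) * Em l p m (fun z => sumR (fun t => nd2 n t z) m).
Proof.
  intros Hl. induction m as [|m IH].
  - unfold rho2R. simpl sumR. rewrite Em_cst.
    rewrite (Em_ext _ _ _ _ (fun _ => 0)). rewrite Em_cst. ring.
    intros z. rewrite rkg_0 by lia. reflexivity.
  - rewrite Em_last.
    rewrite (Em_ext _ _ _ _ (fun z => rho2R n m z + (1 - p 1%nat) * nd2 n m z)).
    2:{ intros z. destruct l as [|l']; [lia|]. unfold layer. simpl seq. simpl map.
        simpl sumcfg. rewrite !sumcfg_const.
        - unfold rho2R, nd2. rewrite !rho_upd_same. simpl andb.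
          rewrite plus_INR, Nat.add_0_r. destruct (rkg n x0 z m 2 <? n)%nat; simpl; ring.
        - intros w t i b Hin. apply in_map_iff in Hin. destruct Hin as [i' [Ei Hi]]. inversion Ei; subst.
          apply in_seq in Hi. unfold rho2R. rewrite rho_upd_other by lia. reflexivity.
        - intros w t i b Hin. apply in_map_iff in Hin. destruct Hin as [i' [Ei Hi]]. inversion Ei; subst.
          apply in_seq in Hi. unfold rho2R. rewrite rho_upd_other by lia. reflexivity. }
    rewrite Em_plus, Em_scal, IH.
    rewrite (Em_horizon_le l p m (S m) (fun z => sumR (fun t => nd2 n t z) (S m))).
    2:{ apply dep_sumR; intros t Ht; apply (dep_mono t); [apply nd2_dep|lia]. }
    2: lia.
    rewrite (Em_ext l p m (fun z => sumR (fun t => nd2 n t z) (S m)) (fun z => sumR (fun t => nd2 n t z) m + nd2 n m z)) by reflexivity.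
    rewrite Em_plus. ring.
Qed.

Open Scope R_scope.

Definition Fsig n l m z : R := if (Tsys n x0 l m z <=? m)%nat then INR (Ssys n x0 m z) else 0.

Lemma Esig_eq l p n m : E_sigma_trunc l p n m = Em l p m (Fsig n l m).
Proof.
  unfold E_sigma_trunc. apply Em_ext. intros z. unfold Fsig. rewrite TH_Tsys, sigmaH_Ssys. reflexivity.
Qed.

Lemma count_nd2 n m z : forall k, (k <= m)%nat ->
  sumR (fun t => nd2 n t z) k = INR (Nat.min k (Ssys n x0 m z)).
Proof.
  induction k as [|k IH]; intros Hk. simpl. reflexivity.
  simpl sumR. rewrite IH by lia.
  assert (L := FH_lt _ m k (S2_mono n x0 z (chain_x0 n)) ltac:(lia)).
  fold (Ssys n x0 m z) in L.
  assert (B := rkg_top n x0 z k 2 (chain_x0 n)).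
  unfold nd2. destruct (Nat.ltb_spec (rkg n x0 z k 2) n).
  - assert (H1 : (k < Ssys n x0 m z)%nat) by (apply L; apply Nat.eqb_neq; lia).
    replace (Nat.min (S k) (Ssys n x0 m z)) with (S (Nat.min k (Ssys n x0 m z))) by lia.
    rewrite S_INR. ring.
  - assert (~ (k < Ssys n x0 m z)%nat) by (intro H1; apply L in H1; apply Nat.eqb_neq in H1; lia).
    replace (Nat.min (S k) (Ssys n x0 m z)) with (Nat.min k (Ssys n x0 m z)) by lia. ring.
Qed.

Lemma pt1 n l m z : (1 <= l)%nat ->
  Rabs (Fsig n l m z - sumR (fun t => nd2 n t z) m) <= INR m * ndR n x0 l m z.
Proof.
  intros Hl. rewrite (count_nd2 n m z m) by lia. unfold Fsig, ndR.
  destruct (doneb n x0 l z m) eqn:Ed.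
  - assert (HT := proj2 (T_le_iff n x0 l m z (chain_x0 n)) Ed).
    assert (HS := S_le_T n x0 l m z Hl (chain_x0 n)).
    replace (Tsys n x0 l m z <=? m)%nat with true by (symmetry; apply Nat.leb_le; auto).
    replace (Nat.min m (Ssys n x0 m z)) with (Ssys n x0 m z) by lia.
    rewrite Rminus_diag, Rabs_R0. lra.
  - assert (HT : ~ (Tsys n x0 l m z <= m)%nat) by (intro H; apply (T_le_iff n x0 l m z (chain_x0 n)) in H; congruence).
    replace (Tsys n x0 l m z <=? m)%nat with false by (symmetry; apply Nat.leb_gt; lia).
    assert (A : INR (Nat.min m (Ssys n x0 m z)) <= INR m) by (apply le_INR; lia).
    assert (B := pos_INR (Nat.min m (Ssys n x0 m z))).
    rewrite Rabs_left1 by lra. lra.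
Qed.

Lemma pt2 n l m z : (1 <= l)%nat ->
  INR n * (1 - ndR n x0 l m z) <= rho2R n m z <= INR n.
Proof.
  intros Hl. unfold rho2R, ndR.
  assert (B := rkg_top n x0 z m 2 (chain_x0 n)).
  split; [|apply le_INR; auto].
  destruct (doneb n x0 l z m) eqn:Ed.
  - unfold doneb in Ed. apply Nat.eqb_eq in Ed.
    assert (A := chain_le n x0 z m (S l) 2 (chain_x0 n) ltac:(lia)).
    rewrite Rminus_0_r, Rmult_1_r. apply le_INR. lia.
  - rewrite Rminus_diag, Rmult_0_r. apply pos_INR.
Qed.

Lemma Em_abs l p m f g h : okp l p -> (forall z, Rabs (f z - g z) <= h z) ->
  Rabs (Em l p m f - Em l p m g) <= Em l p m h.
Proof.
  intros Hp H. apply Rabs_le. split.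
  - assert (A : Em l p m (fun z => g z + (-1) * h z) <= Em l p m f).
    { apply Em_le; auto. intros z. specialize (H z). pose proof (Rle_abs (f z - g z)). pose proof (Rle_abs (-(f z - g z))). rewrite Rabs_Ropp in *. lra. }
    rewrite Em_plus, Em_scal in A. lra.
  - assert (A : Em l p m f <= Em l p m (fun z => g z + h z)).
    { apply Em_le; auto. intros z. specialize (H z). pose proof (Rle_abs (f z - g z)). pose proof (Rle_abs (-(f z - g z))). rewrite Rabs_Ropp in *. lra. }
    rewrite Em_plus in A. lra.
Qed.

Lemma part1 l p n : (1 <= l)%nat -> (forall i, (1 <= i <= l)%nat -> 0 <= p i < 1) ->
  Un_cv (fun m => E_sigma_trunc l p n m) (INR n / (1 - p 1%nat)).
Proof.
  intros Hl Hp.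
  assert (Hq : 0 < 1 - p 1%nat) by (specialize (Hp 1%nat ltac:(lia)); lra).
  assert (Hok := okp_of l p Hp).
  set (a := asys l p n x0).
  assert (Ha0 : forall m, 0 <= a m) by (intros; apply asys_nonneg; auto).
  assert (Hcv := asys_cv l p n x0 Hl (chain_x0 n) Hp). fold a in Hcv.
  assert (Hn : 0 <= INR n) by apply pos_INR.
  assert (Key : forall m, Rabs (E_sigma_trunc l p n m - INR n / (1 - p 1%nat)) <= INR m * a m + INR n / (1 - p 1%nat) * a m).
  { intros m. rewrite Esig_eq.
    assert (A1 : Rabs (Em l p m (Fsig n l m) - Em l p m (fun z => sumR (fun t => nd2 n t z) m)) <= INR m * a m).
    { unfold a, asys. rewrite <- Em_scal. apply Em_abs; auto. intros; apply pt1; auto. }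
    assert (W := wald l p n m Hl).
    assert (A2 : INR n * (1 - a m) <= Em l p m (rho2R n m) <= INR n).
    { unfold a, asys. split.
      - assert (B : Em l p m (fun z => INR n + (- INR n) * ndR n x0 l m z) <= Em l p m (rho2R n m)).
        { apply Em_le; auto. intros z. assert (B := pt2 n l m z Hl). lra. }
        rewrite Em_plus, Em_scal, Em_cst in B. lra.
      - rewrite <- (Em_cst l p m (INR n)). apply Em_le; auto. intros z. apply (pt2 n l m z Hl). }
    assert (E : Em l p m (fun z => sumR (fun t => nd2 n t z) m) = Em l p m (rho2R n m) / (1 - p 1%nat)).
    { rewrite W. field. lra. }
    rewrite E in A1.
    replace (Em l p m (Fsig n l m) - INR n / (1 - p 1%nat)) with
      ((Em l p m (Fsig n l m) - Em l p m (rho2R n m) / (1 - p 1%nat)) + (Em l p m (rho2R n m) - INR n) / (1 - p 1%nat))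
      by (field; lra).
    eapply Rle_trans. apply Rabs_triang. apply Rplus_le_compat; auto.
    unfold Rdiv. rewrite Rabs_mult, Rabs_inv, (Rabs_right (1 - p 1%nat)) by lra.
    rewrite Rabs_left1 by lra.
    apply Rmult_le_reg_r with (1 - p 1%nat); auto.
    replace (- (Em l p m (rho2R n m) - INR n) * / (1 - p 1%nat) * (1 - p 1%nat)) with (INR n - Em l p m (rho2R n m)) by (field; lra).
    replace (INR n * / (1 - p 1%nat) * a m * (1 - p 1%nat)) with (INR n * a m) by (field; lra).
    lra. }
  intros eps Heps.
  set (C := 1 + INR n / (1 - p 1%nat)).
  assert (HC : 0 < C) by (unfold C; assert (0 <= INR n / (1 - p 1%nat)) by (apply Rmult_le_pos; [lra | apply Rlt_le, Rinv_0_lt_compat; lra]); lra).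
  destruct (Hcv (eps / C) ltac:(apply Rdiv_lt_0_compat; lra)) as [N HN].
  exists (S N). intros m Hm. unfold Rdist. eapply Rle_lt_trans. apply Key.
  specialize (HN m ltac:(lia)). unfold Rdist in HN. rewrite Rminus_0_r in HN.
  assert (P : 0 <= INR m * a m) by (apply Rmult_le_pos; auto; apply pos_INR).
  rewrite Rabs_right in HN by lra.
  assert (Hm1 : 1 <= INR m) by (replace 1 with (INR 1) by auto; apply le_INR; lia).
  assert (Q : a m <= INR m * a m) by (specialize (Ha0 m); nra).
  assert (R1 : INR m * a m + INR n / (1 - p 1%nat) * a m <= C * (INR m * a m)).
  { unfold C. assert (0 <= INR n / (1 - p 1%nat)) by (apply Rmult_le_pos; [lra | apply Rlt_le, Rinv_0_lt_compat; lra]). nra. }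
  apply Rmult_lt_compat_l with (r := C) in HN; auto.
  replace (C * (eps / C)) with eps in HN by (field; lra). lra.
Qed.

Open Scope R_scope.

Lemma cv_const c : Un_cv (fun _ => c) c.
Proof. intros eps He. exists 0%nat. intros. unfold Rdist. rewrite Rminus_diag, Rabs_R0. lra. Qed.

Lemma cv_shift u b : Un_cv u b -> Un_cv (fun m => u (S m)) b.
Proof. intros H eps He. destruct (H eps He) as [N HN]. exists N. intros m Hm. apply HN. lia. Qed.

Lemma cv_ext u v b : (forall m, u m = v m) -> Un_cv u b -> Un_cv v b.
Proof. intros E H eps He. destruct (H eps He) as [N HN]. exists N. intros m Hm. rewrite <- E. auto. Qed.

Theorem mainTheorem4 (l : nat) (p : nat -> R) (n : nat)
  (hl : (1 <= l)%nat)
  (hp : forall i, (1 <= i <= l)%nat -> 0 <= p i < 1)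
  (hn : (1 <= n)%nat) :
  Un_cv (fun m => E_sigma_trunc l p n m) (INR n / (1 - p 1%nat)) /\
  exists a b : R,
    Un_cv (fun m => E_tau_trunc l p n m) a /\
    Un_cv (fun m => E_tau_trunc l p (S n) m) b /\
    a <= b.
Proof.
  split. apply part1; auto.
  assert (Hok := okp_of l p hp).
  assert (Hq : 0 < 1 - p 1%nat) by (specialize (hp 1%nat ltac:(lia)); lra).
  destruct (Ftau_cv l p n x0 hl (chain_x0 n) hp) as [a Ha].
  destruct (Ftau_cv l p (S n) x0 hl (chain_x0 (S n)) hp) as [b Hb].
  assert (Ha' : Un_cv (fun m => E_tau_trunc l p n m) a)
    by (apply (cv_ext _ _ _ (fun m => eq_sym (Etau_eq l p n m)) Ha)).
  assert (Hb' : Un_cv (fun m => E_tau_trunc l p (S n) m) b)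
    by (apply (cv_ext _ _ _ (fun m => eq_sym (Etau_eq l p (S n) m)) Hb)).
  exists a, b. split; auto. split; auto.
  set (A := fun m => Em l p m (Ftau (S n) e2 l m)).
  assert (HA : Un_cv A b).
  { assert (C := CV_mult _ _ _ _ (CV_minus _ _ _ _ (cv_shift _ _ Hb') (CV_mult _ _ _ _ (cv_const (p 1%nat)) Hb'))
                   (cv_const (/ (1 - p 1%nat)))).
    replace b with ((b - p 1%nat * b) * / (1 - p 1%nat)) by (field; lra).
    refine (cv_ext _ _ _ _ C). intros m. simpl. rewrite Etau_rec by auto. unfold A. field. lra. }
  assert (HL : Un_cv (fun m => E_tau_trunc l p n m - INR m * asys l p (S n) e2 m) a).
  { replace a with (a - 0) by ring. apply CV_minus; auto. apply asys_cv; auto. apply chain_e2. }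
  apply (Rle_cv_lim (Un := fun m => E_tau_trunc l p n m - INR m * asys l p (S n) e2 m) (Vn := A)); auto.
  intros m. rewrite Etau_eq. unfold A, asys.
  rewrite <- Em_scal. rewrite (Em_ext l p m (Ftau (S n) e2 l m)
     (fun w => (Ftau n x0 l m w + (-1) * (INR m * ndR (S n) e2 l m w)) + (Ftau (S n) e2 l m w - (Ftau n x0 l m w - INR m * ndR (S n) e2 l m w)))) by (intros; ring).
  rewrite Em_plus, Em_plus, Em_scal.
  assert (0 <= Em l p m (fun w => Ftau (S n) e2 l m w - (Ftau n x0 l m w - INR m * ndR (S n) e2 l m w))).
  { rewrite <- (Em_cst l p m 0). apply Em_le; auto. intros w. assert (X := coupling_pt n l m w hl). lra. }
  rewrite (Em_scal l p m (-1)), (Em_scal l p m (INR m)). lra.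
Qed.
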